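(* For $n\ge 2$, $g(n)\ge \left\lceil\frac{(n-1)^2+1}{2}\right\rceil$.
   Context: $K_n$ is the complete graph on $n$ vertices. A complete bipartite subgraph of a graph $G$ has two disjoint nonempty vertex classes $X,Y$ and edge set all $xy$ with $x\in X,y\in Y$. A block is a set $E(B_1)\times E(B_2)$ where $B_1,B_2$ are complete bipartite subgraphs of $K_n$; $g(n)$ is the minimum number of blocks partitioning $E(K_n)\times E(K_n)$. *)

(* Defs.v *)
From mathcomp Require Import all_boot.
Set Implicit Arguments. Unset Strict Implicit. Unset Printing Implicit Defensive.

Definition edgeK (n : nat) : {set {set 'I_n}} := [set e : {set 'I_n} | #|e| == 2].

Definition bip_edges (n : nat) (X Y : {set 'I_n}) : {set {set 'I_n}} :=
  [set [set x; y] | x in X, y in Y].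

Definition is_cbip_edgeset (n : nat) (E : {set {set 'I_n}}) : bool :=
  [exists X : {set 'I_n}, exists Y : {set 'I_n},
    [&& X != set0, Y != set0, [disjoint X & Y] & E == bip_edges X Y]].

Definition is_block (n : nat) (S : {set {set 'I_n} * {set 'I_n}}) : bool :=
  [exists E1 : {set {set 'I_n}}, exists E2 : {set {set 'I_n}},
    [&& is_cbip_edgeset E1, is_cbip_edgeset E2 & S == setX E1 E2]].

Definition block_partition (n : nat) (P : {set {set {set 'I_n} * {set 'I_n}}}) : bool :=
  partition P (setX (edgeK n) (edgeK n)) && [forall S in P, is_block S].

(* g(n): the minimum number of blocks in such a partition.  The default value
   #|E(K_n)|^2 is attained by the partition into singletons, so it never
   exceeds the true minimum. *)
Definition g (n : nat) : nat :=
  \big[minn/#|edgeK n| ^ 2]_(P : {set {set {set 'I_n} * {set 'I_n}}}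
                              | block_partition P) #|P|.

(* Main.v *)
Require Import Defs.
From mathcomp Require Import all_boot all_order all_algebra.
From mathcomp Require Import ring lra zify.
Set Implicit Arguments. Unset Strict Implicit. Unset Printing Implicit Defensive.
Import Order.TTheory GRing.Theory Num.Theory.
Local Open Scope ring_scope.

Lemma set2_eq (T : finType) (a b c d : T) :
  [set a; b] = [set c; d] -> (a = c /\ b = d) \/ (a = d /\ b = c).
Proof.
move=> E.
have Ha : a \in [set c; d] by rewrite -E set21.
have Hb : b \in [set c; d] by rewrite -E set22.
have Hc : c \in [set a; b] by rewrite E set21.
have Hd : d \in [set a; b] by rewrite E set22.
rewrite !inE in Ha Hb Hc Hd.
case/orP: Ha => /eqP Ha; case/orP: Hb => /eqP Hb; subst.
- by move: Hd; rewrite orbb => /eqP ->; left.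
- by left.
- by right.
- by move: Hc; rewrite orbb => /eqP ->; left.
Qed.

Lemma bip_mem n (X Y : {set 'I_n}) i k :
  ([set i; k] \in bip_edges X Y) = (i \in X) && (k \in Y) || (i \in Y) && (k \in X).
Proof.
apply/imset2P/idP.
- case=> x y Hx Hy /set2_eq [[-> ->]|[-> ->]]; first by rewrite Hx Hy.
  by rewrite Hx Hy orbT.
- case/orP=> /andP [Hi Hk]; first by exists i k.
  by exists k i => //; rewrite setUC.
Qed.

Lemma natr_and (x y : bool) : ((x && y)%:R : rat) = x%:R * y%:R.
Proof. by case: x; case: y; rewrite ?mul0r ?mul1r. Qed.

Lemma ind4 (a1 a2 b1 b2 : bool) : ~~ (a1 && a2) -> ~~ (b1 && b2) ->
  (((a1 || a2) && (b1 || b2))%:R : rat) = (a1%:R + a2%:R) * (b1%:R + b2%:R).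
Proof. by case: a1; case: a2; case: b1; case: b2 => //= _ _; ring. Qed.

Lemma sum_pred1r (I : finType) (c : I) (w : rat) : \sum_i (c == i)%:R * w = w.
Proof.
rewrite (bigD1 c) //= eqxx mul1r big1 ?addr0 // => i Hi.
by rewrite eq_sym (negbTE Hi) mul0r.
Qed.

Lemma sum_eq_in (I : finType) (D : {set I}) (c : I) (w : rat) :
  \sum_(p in D) (c == p)%:R * w = (c \in D)%:R * w.
Proof.
case: (boolP (c \in D)) => H.
  rewrite (bigD1 c) //= eqxx mul1r big1 ?addr0 ?mul1r // => p /andP [_ Hp].
  by rewrite eq_sym (negbTE Hp) mul0r.
rewrite mul0r big1 // => p Hp; case: eqP => [E|_]; last by rewrite mul0r.
by rewrite E Hp in H.
Qed.

Lemma sum2_split (I J : finType) (F G : I -> J -> rat) :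
  \sum_i \sum_j (F i j + G i j) = \sum_i \sum_j F i j + \sum_i \sum_j G i j.
Proof. by rewrite -big_split; apply eq_bigr => i _; rewrite big_split. Qed.

Lemma sum2_prod (I J : finType) (F : I -> rat) (G : J -> rat) :
  \sum_i \sum_j F i * G j = (\sum_i F i) * (\sum_j G j).
Proof. by rewrite big_distrlr. Qed.

Section Q.
Variable n : nat.
Notation T := ('I_n * 'I_n)%type.
Variable V : T -> rat.

Definition cf (t u : T) : {set 'I_n} * {set 'I_n} := ([set t.1; u.1], [set t.2; u.2]).
Definition Qf (D : {set {set 'I_n} * {set 'I_n}}) : rat :=
  \sum_t \sum_u (cf t u \in D)%:R * (V t * V u).

Lemma QfE (D : {set {set 'I_n} * {set 'I_n}}) : \sum_(p in D) \sum_t \sum_u (cf t u == p)%:R * (V t * V u) = Qf D.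
Proof.
rewrite exchange_big; apply eq_bigr => t _; rewrite exchange_big.
by apply eq_bigr => u _; apply sum_eq_in.
Qed.

Lemma Qf_part (P : {set {set {set 'I_n} * {set 'I_n}}}) :
  trivIset P -> Qf (cover P) = \sum_(S in P) Qf S.
Proof.
move=> tP; rewrite -QfE (big_trivIset _ tP).
by apply eq_bigr => S _; rewrite QfE.
Qed.

Definition coef (A B : {set 'I_n}) (t : T) : rat := (t.1 \in A)%:R * (t.2 \in B)%:R.
Definition L A B := \sum_t coef A B t * V t.

Lemma Qf_block (X Y X' Y' : {set 'I_n}) :
  [disjoint X & Y] -> [disjoint X' & Y'] ->
  Qf (setX (bip_edges X Y) (bip_edges X' Y')) =
  L X X' * L Y Y' + L X Y' * L Y X' + L Y X' * L X Y' + L Y Y' * L X X'.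
Proof.
move=> D1 D2; rewrite /Qf /L -!sum2_prod -!sum2_split.
apply eq_bigr => t _; apply eq_bigr => u _.
rewrite in_setX !bip_mem ind4; first by rewrite !natr_and /coef; ring.
  apply/negP => /andP [/andP [h1 _] /andP [h2 _]]; by rewrite (disjointFr D1 h1) in h2.
apply/negP => /andP [/andP [h1 _] /andP [h2 _]]; by rewrite (disjointFr D2 h1) in h2.
Qed.

Definition rs i := \sum_u (u.1 == i)%:R * V u.
Definition cs j := \sum_u (u.2 == j)%:R * V u.
Definition Tot := \sum_u V u.

Lemma inner t : \sum_u ((t.1 != u.1) && (t.2 != u.2))%:R * (V t * V u) =
   V t * (Tot - rs t.1 - cs t.2 + V t).
Proof.
have -> : V t = \sum_u ((u.1 == t.1)%:R * (u.2 == t.2)%:R) * V u.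
  rewrite (bigD1 t) //= !eqxx !mul1r big1 ?addr0 // => u Hu.
  case: eqP => E1; case: eqP => E2; rewrite ?mul0r ?mulr0 //.
  by move: Hu; case: u E1 E2 => a b /= -> ->; rewrite -surjective_pairing eqxx.
set W := \sum_u _.
rewrite /Tot /rs /cs -!sumrB -big_split big_distrr /=.
apply eq_bigr => u _.
have -> : (((t.1 != u.1) && (t.2 != u.2))%:R : rat) =
   1 - (u.1 == t.1)%:R - (u.2 == t.2)%:R + (u.1 == t.1)%:R * (u.2 == t.2)%:R.
  by rewrite ![u.1 == _]eq_sym ![u.2 == _]eq_sym; case: (t.1 == u.1); case: (t.2 == u.2) => /=; ring.
ring.
Qed.

Lemma sum_rs : \sum_i rs i = Tot.
Proof.
rewrite /rs exchange_big; apply eq_bigr => u _.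
by rewrite -big_distrl /= (eq_bigr (fun i => (u.1 == i)%:R * 1)) ?sum_pred1r ?mul1r // => i _; rewrite mulr1.
Qed.

Lemma sum_cs : \sum_i cs i = Tot.
Proof.
rewrite /cs exchange_big; apply eq_bigr => u _.
by rewrite -big_distrl /= (eq_bigr (fun i => (u.2 == i)%:R * 1)) ?sum_pred1r ?mul1r // => i _; rewrite mulr1.
Qed.

Lemma Qf_full : Qf (setX (edgeK n) (edgeK n)) =
  \sum_t V t * (Tot - rs t.1 - cs t.2 + V t).
Proof.
apply eq_bigr => t _; rewrite -inner; apply eq_bigr => u _.
rewrite in_setX /edgeK !inE !cards2.
by case: (t.1 != u.1); case: (t.2 != u.2).
Qed.

Lemma Qf_pos s : (forall i, rs i = s) -> (forall j, cs j = s) -> (2 <= n)%N ->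
  (exists t, V t != 0) -> 0 < Qf (setX (edgeK n) (edgeK n)).
Proof.
move=> Hr Hc n2 [t0 Ht0].
have HT : Tot = n%:R * s.
  by rewrite -sum_rs (eq_bigr (fun _ => s)) // sumr_const card_ord mulr_natl.
rewrite Qf_full (eq_bigr (fun t => V t * (Tot - 2 * s) + V t ^+ 2)); last first.
  by move=> t _; rewrite Hr Hc; ring.
rewrite big_split /= -big_distrl /= -/Tot HT.
have h1 : 0 <= n%:R * s * (n%:R * s - 2 * s).
  have -> : n%:R * s * (n%:R * s - 2 * s) = (n - 2)%:R * (n%:R * s ^+ 2).
    rewrite natrB // ; ring.
  by rewrite mulr_ge0 // mulr_ge0 // sqr_ge0.
apply: (lt_le_trans _ (lerD h1 (lexx _))); rewrite add0r.
rewrite (bigD1 t0) //=.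
have hs : 0 <= \sum_(i | i != t0) V i ^+ 2 by apply sumr_ge0 => i _; apply sqr_ge0.
have hp : 0 < V t0 ^+ 2 by rewrite lt0r sqr_ge0 sqrf_eq0 Ht0.
lra.
Qed.
End Q.

Lemma kernel_exists (T I : finType) (c : I -> T -> rat) : (#|I| < #|T|)%N ->
  exists v : T -> rat, (exists t, v t != 0) /\ forall r, \sum_t c r t * v t = 0.
Proof.
move=> HIT.
pose A : 'M[rat]_(#|T|, #|I|) := \matrix_(x, r) c (enum_val r) (enum_val x).
have Hk : kermx A != 0.
  apply/eqP => E; have := mxrank_ker A; rewrite E mxrank0.
  have := rank_leq_col A; lia.
have [i [j Hij]] : exists i j, kermx A i j != 0.
  case: (boolP [exists i, exists j, kermx A i j != 0]) => [/existsP [i /existsP [j H]]|H].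
    by exists i, j.
  exfalso; move/eqP: Hk; apply; apply/matrixP => a b; rewrite [RHS]mxE.
  apply/eqP; move: H; apply: contraNT => H; apply/existsP; exists a; apply/existsP; exists b; exact: H.
exists (fun t => kermx A i (enum_rank t)); split.
  by exists (enum_val j); rewrite enum_valK.
move=> r.
have := congr1 (fun M : 'M[rat]_(#|T|, #|I|) => M i (enum_rank r)) (mulmx_ker A); rewrite /= !mxE.
rewrite (reindex enum_rank) /=; last by apply: onW_bij; apply: enum_rank_bij.
move=> E; rewrite -[RHS]E; apply eq_bigr => t _; rewrite mulrC; congr (_ * _); rewrite /A mxE !enum_rankK.
done.
Qed.

Definition Q4 n := (({set 'I_n} * {set 'I_n}) * ({set 'I_n} * {set 'I_n}))%type.
Definition goodq n (S : {set {set 'I_n} * {set 'I_n}}) (q : Q4 n) :=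
  [&& [disjoint q.1.1 & q.1.2], [disjoint q.2.1 & q.2.2] &
      S == setX (bip_edges q.1.1 q.1.2) (bip_edges q.2.1 q.2.2)].

Lemma block_good n (S : {set {set 'I_n} * {set 'I_n}}) : is_block S -> exists q : Q4 n, goodq S q.
Proof.
case/existsP => E1 /existsP [E2 /and3P [/existsP [X /existsP [Y /and4P [_ _ dXY /eqP e1]]]
   /existsP [X' /existsP [Y' /and4P [_ _ dXY' /eqP e2]]] /eqP ->]].
by exists ((X, Y), (X', Y')); rewrite /goodq /= dXY dXY' e1 e2 eqxx.
Qed.

Definition qof n (S : {set {set 'I_n} * {set 'I_n}}) : Q4 n :=
  odflt ((set0, set0), (set0, set0)) [pick q | goodq S q].

Lemma qofP n (S : {set {set 'I_n} * {set 'I_n}}) : is_block S -> goodq S (qof S).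
Proof.
rewrite /qof; case: pickP => [q //|H]; case/block_good => q; by rewrite H.
Qed.

Lemma main_bound m (P : {set {set {set 'I_m.+1} * {set 'I_m.+1}}}) :
  (0 < m)%N -> block_partition P -> ((m ^ 2 + 2) %/ 2 <= #|P|)%N.
Proof.
move=> m0 /andP [/and3P [/eqP cov tP _] /forallP blk].
rewrite leqNgt; apply/negP => Hlt.
have HP2 : (2 * #|P| <= m ^ 2)%N by lia.
pose I := ({S | S \in P} * bool + 'I_m * bool)%type.
pose c : I -> 'I_m.+1 * 'I_m.+1 -> rat := fun r => match r with
  | inl (SS, b) => let q := qof (val SS) in if b then coef q.1.1 q.2.1 else coef q.1.1 q.2.2
  | inr (i, b) => if b then (fun t => (t.1 == lift ord0 i)%:R - (t.1 == ord0)%:R)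
                  else (fun t => (t.2 == lift ord_max i)%:R - (t.1 == ord0)%:R) end.
have HI : (#|{: I}| < #|{: 'I_m.+1 * 'I_m.+1}|)%N.
  rewrite card_sum !card_prod card_sig card_bool !card_ord.
  have -> : #|[pred x | x \in P]| = #|P| by apply: eq_card.
  lia.
have [V [nz Hc]] := kernel_exists c HI.
have Hrow : forall i, rs V i = rs V ord0.
  move=> i; case: (unliftP ord0 i) => [j ->|-> //].
  apply/eqP; rewrite -subr_eq0 /rs -sumrB; apply/eqP; rewrite -[RHS](Hc (inr (j, true))).
  by apply eq_bigr => t _; rewrite /= mulrBl.
have Hcol : forall j : 'I_m, cs V (lift ord_max j) = rs V ord0.
  move=> j.
  apply/eqP; rewrite -subr_eq0 /rs /cs -sumrB; apply/eqP; rewrite -[RHS](Hc (inr (j, false))).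
  by apply eq_bigr => t _; rewrite /= mulrBl.
have Hcol_all : forall j, cs V j = rs V ord0.
  have E : forall j : 'I_m, widen_ord (leqnSn m) j = lift ord_max j.
    by move=> j; apply: val_inj; rewrite /= /bump leqNgt ltn_ord.
  move=> j; case: (unliftP ord_max j) => [j' ->|->]; first exact: Hcol.
  have := sum_cs V; rewrite -(sum_rs V) big_ord_recr /=.
  rewrite (eq_bigr (fun _ => rs V ord0)) => [|k _]; last by rewrite E Hcol.
  rewrite [RHS](eq_bigr (fun _ => rs V ord0)) => [|k _]; last by rewrite Hrow.
  by rewrite !sumr_const !card_ord mulrS addrC => /addIr.
have Hpos := Qf_pos Hrow Hcol_all (m0 : (2 <= m.+1)%N) nz.
have Hzero : Qf V (cover P) = 0.
  rewrite Qf_part // big1 // => S HS.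
  have := qofP (implyP (blk S) HS).
  have h1 := Hc (inl (exist _ S HS, true)).
  have h2 := Hc (inl (exist _ S HS, false)).
  rewrite /= in h1 h2.
  move: h1 h2; case: (qof S) => [[X Y] [X' Y']] /= h1 h2.
  case/and3P => /= d1 d2 /eqP ->.
  rewrite Qf_block // /L h1 h2; ring.
by move: Hpos; rewrite -cov Hzero ltxx.
Qed.

Local Close Scope ring_scope.

Theorem mainTheorem9 (n : nat) : 2 <= n -> ((n - 1) ^ 2 + 1 + 1) %/ 2 <= g n.
Proof.
case: n => [//|m] /= m0.
have -> : (m.+1 - 1 = m)%N by lia.
have -> : (m ^ 2 + 1 + 1 = m ^ 2 + 2)%N by lia.
rewrite /g; apply: (big_ind (fun x => (m ^ 2 + 2) %/ 2 <= x)%N).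
- rewrite /edgeK card_draws card_ord.
  have h : (m <= 'C(m.+1, 2))%N by rewrite binS bin1 leq_addl.
  have h2 : (m ^ 2 <= 'C(m.+1, 2) ^ 2)%N by rewrite leq_exp2r.
  have hm : 0 < m ^ 2 by rewrite expn_gt0; apply/orP; left.
  have h3 : (m ^ 2 + 2) %/ 2 <= m ^ 2.
    rewrite -ltnS ltn_divLR //; lia.
  exact: leq_trans h3 h2.
- by move=> x y hx hy; rewrite leq_min hx hy.
- by move=> P HP; apply: main_bound.
Qed.
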